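(* Let $G$ be a finite simple graph with $n$ vertices $v_1,\dots,v_n$, let $\bar{\bar{d}}=\sqrt{\frac{d(v_1)^2+\cdots+d(v_n)^2}{n}}$, and let $\omega(G)$ be the clique number of $G$. Suppose $$\omega(G)=\frac{n}{n-\bar{\bar{d}}}.$$ Then $G$ is a regular complete $\omega(G)$-partite graph (i.e. a complete $\omega(G)$-chromatic graph which is regular, so its $\omega(G)$ parts all have size $n/\omega(G)$).
   Context: All graphs are finite, undirected, without loops or multiple edges; $d(v)$ denotes the degree of vertex $v$. *)

(* Defs.v *)
From HB Require Import structures.
From mathcomp Require Import all_boot all_order all_algebra.
From mathcomp Require Import reals.
Set Implicit Arguments. Unset Strict Implicit. Unset Printing Implicit Defensive.
Import Order.TTheory GRing.Theory Num.Theory.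

Definition simple_graph (T : finType) (e : rel T) : Prop :=
  symmetric e /\ irreflexive e.

Definition deg (T : finType) (e : rel T) (v : T) : nat := #|[set w | e v w]|.

Definition is_clique (T : finType) (e : rel T) (A : {set T}) : bool :=
  [forall x in A, forall y in A, (x != y) ==> e x y].

Definition clique_number (T : finType) (e : rel T) : nat :=
  \max_(A : {set T} | is_clique e A) #|A|.

Definition complete_multipartite (T : finType) (e : rel T) (k : nat) : Prop :=
  exists f : T -> 'I_k,
    (forall i : 'I_k, exists x : T, f x = i) /\
    (forall x y : T, e x y = (f x != f y)).

Definition regular_graph (T : finType) (e : rel T) : Prop :=
  forall v w : T, deg e v = deg e w.

Definition quad_mean_deg (R : realType) (T : finType) (e : rel T) : R :=
  Num.sqrt ((\sum_(v : T) ((deg e v)%:R ^+ 2)) / (#|T|%:R)).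

(* Main.v *)
Require Import Defs.
From HB Require Import structures.
From mathcomp Require Import all_boot all_order all_algebra.
From mathcomp Require Import reals.
From mathcomp Require Import ring lra zify.
Import Order.TTheory GRing.Theory Num.Theory.
Set Implicit Arguments. Unset Strict Implicit. Unset Printing Implicit Defensive.

Section Comb.
Variables (T : finType) (e : rel T).
Hypothesis esym : symmetric e.
Hypothesis eirr : irreflexive e.

Definition degS (S : {set T}) v := #|[set w in S | e v w]|.

Lemma clique_add (A : {set T}) v : is_clique e A -> v \notin A ->
  (forall w, w \in A -> e v w) -> is_clique e (v |: A).
Proof.
move=> /forall_inP HA vA Hv; apply/forall_inP => x; rewrite !inE => /orP[/eqP->|xA];
  apply/forall_inP => y; rewrite !inE => /orP[/eqP->|yA]; apply/implyP => Hxy.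
- by rewrite eqxx in Hxy.
- exact: Hv.
- by rewrite esym; apply: Hv.
- by have /forall_inP := HA x xA => /(_ y yA) /implyP; apply.
Qed.

Lemma comb_main j (S : {set T}) :
  (forall A : {set T}, A \subset S -> is_clique e A -> #|A| <= j.+1) ->
  (forall v, v \in S -> #|S| * j <= degS S v * j.+1) ->
  [/\ forall v, v \in S -> degS S v * j.+1 = #|S| * j,
      forall x y z, x \in S -> y \in S -> z \in S -> ~~ e x y -> ~~ e y z -> ~~ e x z
    & S != set0 -> exists A : {set T}, [/\ A \subset S, is_clique e A & #|A| = j.+1]].
Proof.
elim: j S => [|j IH] S Hcl Hdeg.
  have noe : forall x y, x \in S -> y \in S -> ~~ e x y.
    move=> x y xS yS; apply/negP => exy.
    have xy : x != y by apply: contraTneq exy => ->; rewrite eirr.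
    have := Hcl [set x; y]; rewrite subUset !sub1set xS yS /= cards2 xy => /(_ isT).
    move=> H; suff: is_clique e [set x; y] by move/H.
    apply: clique_add; rewrite ?inE ?(negbTE xy) //=.
      by apply/forall_inP => a; rewrite inE => /eqP-> ; apply/forall_inP => b; rewrite inE => /eqP->; rewrite eqxx.
    by move=> w; rewrite inE => /eqP->.
  split.
  - move=> v vS; rewrite muln1 muln0; apply/eqP; rewrite cards_eq0; apply/eqP/setP => w.
    by rewrite !inE; apply/negbTE; apply/nandP; case: (boolP (w \in S)) => wS; [right; apply: noe|left].
  - by move=> x y z xS _ zS _ _; apply: noe.
  - case/set0Pn => v vS; exists [set v]; rewrite sub1set vS cards1; split => //.
    by apply/forall_inP => a; rewrite inE => /eqP-> ; apply/forall_inP => b; rewrite inE => /eqP->; rewrite eqxx.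

have [S0|/set0Pn [v0 v0S]] := eqVneq S set0.
  by split => // x; rewrite S0 inE.
set N := [set w in S | e v0 w].
set Sc := S :\: N.
have NS : N \subset S by apply/subsetP => w; rewrite inE => /andP[].
have cardS : #|S| = #|N| + #|Sc|.
  by rewrite -(cardsID N S) (setIidPr NS).
have v0Sc : v0 \in Sc by rewrite !inE v0S eirr.
have tpos : 0 < #|Sc| by apply/card_gt0P; exists v0.
have HsT : #|Sc| * j.+1 <= #|N|.
  have := Hdeg v0 v0S; rewrite /degS -/N cardS; nia.
have degsplit : forall u, u \in S ->
    degS S u = degS N u + #|[set w in S | e u w] :\: N|.
  move=> u uS; rewrite /degS -(cardsID N [set w in S | e u w]); congr (_ + _).
  apply: eq_card => w; rewrite !inE; case: (boolP (w \in S)) => wS /=;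
     rewrite ?andbF ?andbT //.
  by rewrite andbC; case: (e u w) => //=; rewrite andbC.
have degsub : forall u, #|[set w in S | e u w] :\: N| <= #|Sc|.
  move=> u; apply: subset_leq_card; apply/subsetP => w; rewrite !inE.
  by case/andP => -> /andP[-> _].
have HclN : forall A : {set T}, A \subset N -> is_clique e A -> #|A| <= j.+1.
  move=> A AN cA.
  have v0A : v0 \notin A by apply: contraTN v0Sc => /(subsetP AN) v0N; rewrite inE v0N.
  have := Hcl (v0 |: A); rewrite subUset sub1set v0S (subset_trans AN NS) cardsU1 v0A.
  move=> /(_ isT); apply; apply: clique_add => // w /(subsetP AN); rewrite inE; case/andP.
  by [].
have HdegN : forall u, u \in N -> #|N| * j <= degS N u * j.+1.
  move=> u uN; have uS : u \in S by apply: (subsetP NS).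
  have := Hdeg u uS; rewrite degsplit // cardS.
  have := degsub u; nia.
have [Ha Hb Hc] := IH N HclN HdegN.
have [u0 u0N] : exists u0, u0 \in N.
  apply/set0Pn; rewrite -card_gt0; move: HsT tpos; nia.
have Nne : N != set0 by apply/set0Pn; exists u0.
have Hst : #|N| = #|Sc| * j.+1.
  have u0S : u0 \in S by apply: (subsetP NS).
  have := Hdeg u0 u0S; have := Ha u0 u0N; rewrite degsplit // cardS.
  have := degsub u0; move: HsT; nia.
have HadjSc : forall u w, u \in N -> w \in Sc -> e u w.
  move=> u w uN wSc; have uS : u \in S by apply: (subsetP NS).
  have E : [set w in S | e u w] :\: N = Sc.
    apply/eqP; rewrite eqEcard; apply/andP; split.
      by apply/subsetP => x; rewrite !inE; case/andP => -> /andP[-> _].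
    have := Hdeg u uS; have := Ha u uN; rewrite degsplit // cardS Hst; nia.
  by move: wSc; rewrite -E !inE => /andP[_ /andP[_]].
have Hind : forall w w', w \in Sc -> w' \in Sc -> ~~ e w w'.
  move=> w w' wSc w'Sc; apply/negP => eww'.
  have [A [AN cA cardA]] := Hc Nne.
  have w'A : w' \notin A by apply: contraTN w'Sc => /(subsetP AN) w'N; rewrite inE w'N.
  have wA : w \notin A by apply: contraTN wSc => /(subsetP AN) wN; rewrite inE wN.
  have ww' : w != w' by apply: contraTneq eww' => ->; rewrite eirr.
  have c1 : is_clique e (w' |: A).
    apply: clique_add => // a aA; rewrite esym; apply: HadjSc => //; exact: (subsetP AN).
  have c2 : is_clique e (w |: (w' |: A)).
    apply: clique_add => //; first by rewrite !inE negb_or ww'.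
    move=> a; rewrite !inE => /orP[/eqP->//|aA]; rewrite esym; apply: HadjSc => //; exact: (subsetP AN).
  have Hsub : w |: (w' |: A) \subset S.
    rewrite !subUset !sub1set; apply/and3P; split.
    - by move: wSc; rewrite inE => /andP[].
    - by move: w'Sc; rewrite inE => /andP[].
    - exact: subset_trans AN NS.
  have := Hcl _ Hsub c2; rewrite !cardsU1 !inE negb_or ww' (negbTE wA) (negbTE w'A) cardA /=.
  by rewrite ltnn.
have sameside : forall a b, a \in S -> b \in S -> ~~ e a b -> (a \in N) = (b \in N).
  move=> a b aS bS nab; case: (boolP (a \in N)) => aN; case: (boolP (b \in N)) => bN //.
  - by rewrite HadjSc // inE bN in nab.
  - by rewrite esym HadjSc // inE aN in nab.
split.
- move=> v vS; case: (boolP (v \in N)) => vN.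
    have E : [set w in S | e v w] :\: N = Sc.
      apply/setP => w; rewrite /Sc !in_setD; case: (boolP (w \in N)) => wN //=.
      rewrite inE; case wS: (w \in S) => //=; apply: HadjSc => //; by rewrite in_setD wN wS.
    rewrite degsplit // E cardS Hst; have := Ha v vN; rewrite Hst; nia.
  have vSc : v \in Sc by rewrite inE vN.
  have E : degS S v = #|N|.
    rewrite /degS; apply: eq_card => w; rewrite inE.
    case: (boolP (w \in N)) => wN.
      by rewrite (subsetP NS) //= esym HadjSc.
    case wS: (w \in S) => //=; apply/negbTE; apply: Hind => //; by rewrite in_setD wN wS.
  by rewrite E cardS Hst; nia.
- move=> x y z xS yS zS nxy nyz.
  have Exy := sameside x y xS yS nxy; have Eyz := sameside y z yS zS nyz.
  case: (boolP (x \in N)) => xN.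
    have yN : y \in N by rewrite -Exy.
    have zN : z \in N by rewrite -Eyz.
    exact: Hb nxy nyz.
  apply: Hind; rewrite inE ?xS ?zS; first by rewrite xN.
  by rewrite -Eyz -Exy xN.
- move=> _; have [A [AN cA cardA]] := Hc Nne.
  have v0A : v0 \notin A by apply: contraTN v0Sc => /(subsetP AN) v0N; rewrite inE v0N.
  exists (v0 |: A); split.
  + by rewrite subUset sub1set v0S (subset_trans AN NS).
  + by apply: clique_add => // w /(subsetP AN); rewrite inE => /andP[].
  + by rewrite cardsU1 v0A cardA.
Qed.

Lemma build_f (k : nat) (C : {set T}) : (0 < k)%N -> is_clique e C -> #|C| = k ->
  (forall x y z, ~~ e x y -> ~~ e y z -> ~~ e x z) ->
  (forall A : {set T}, is_clique e A -> #|A| <= k) -> complete_multipartite e k.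
Proof.
move=> k0 cliC Hc trans Hmax.
have [c0 c0C] : exists c0, c0 \in C by apply/set0Pn; rewrite -card_gt0 Hc.
have ex : forall x, exists2 c, c \in C & ~~ e x c.
  move=> x; apply/exists_inP; apply: contraT; rewrite negb_exists_in => /forall_inP H.
  have xC : x \notin C by apply: contraT; rewrite negbK => xC; have := H x xC; rewrite eirr.
  have cl : is_clique e (x |: C).
    by apply: clique_add => // w wC; have := H w wC; rewrite negbK.
  by have := Hmax _ cl; rewrite cardsU1 xC Hc ltnn.
pose g x := odflt x [pick c in C | ~~ e x c].
have gP : forall x, g x \in C /\ ~~ e x (g x).
  move=> x; rewrite /g; case: pickP => [c /andP[cC nc]|H] //=.
  by have [c cC nc] := ex x; have := H c; rewrite cC nc.
have uniq : forall x c c', c \in C -> c' \in C -> ~~ e x c -> ~~ e x c' -> c = c'.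
  move=> x c c' cC c'C n1 n2; apply/eqP; apply: contraT => cc'.
  have /forall_inP/(_ c cC)/forall_inP/(_ c' c'C) := cliC; rewrite cc' /= => ecc'.
  by have := trans c x c'; rewrite esym n1 n2 ecc' => /(_ isT isT).
pose f x := cast_ord Hc (enum_rank_in c0C (g x)).
have fE : forall x y, (f x == f y) = (g x == g y).
  move=> x y; apply/eqP/eqP => [H|E]; last by rewrite /f E.
  have /(congr1 (@enum_val _ (mem C))) : enum_rank_in c0C (g x) = enum_rank_in c0C (g y).
    by apply: (cast_ord_inj (eq_n := Hc)).
  by rewrite !enum_rankK_in //; [case: (gP y) | case: (gP x)].
exists f; split.
- move=> i; pose c := enum_val (cast_ord (Logic.eq_sym Hc) i).
  have cC : c \in C by apply: enum_valP.
  have gc : g c = c by have [gC ng] := gP c; apply: (uniq c) => //; rewrite eirr.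
  by exists c; rewrite /f gc enum_valK_in cast_ordKV.
- move=> x y; rewrite fE; case: (boolP (e x y)) => exy.
    apply: Logic.eq_sym; apply/negP => /eqP E.
    have [_ n1] := gP x; have [_ n2] := gP y.
    by have := trans x (g x) y n1; rewrite E esym n2 exy => /(_ isT).
  apply: Logic.eq_sym; apply/negbF/eqP.
  have [gx n1] := gP x; have [gy n2] := gP y.
  by apply: (uniq x) => //; apply: trans exy n2.
Qed.
End Comb.

Local Open Scope ring_scope.

Section Cauchy.
Variable R : realFieldType.
Variable T : finType.

Lemma sqdiff (A : {pred T}) (f : T -> R) :
  \sum_(u in A) \sum_(v in A) (f u - f v) ^+ 2 =
  2 * (#|A|%:R * \sum_(u in A) f u ^+ 2 - (\sum_(u in A) f u) ^+ 2).
Proof.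
have E : forall u, \sum_(v in A) (f u - f v) ^+ 2 =
   #|A|%:R * f u ^+ 2 - 2 * f u * (\sum_(v in A) f v) + \sum_(v in A) f v ^+ 2.
  move=> u; rewrite (eq_bigr (fun v => (f u ^+ 2 - 2 * f u * f v) + f v ^+ 2)); last first.
    by move=> v _; ring.
  by rewrite big_split /= sumrB sumr_const -mulr_sumr [#|A|%:R * _]mulr_natl.
rewrite (eq_bigr _ (fun u _ => E u)) big_split /= sumrB sumr_const -!mulr_sumr.
rewrite -!mulr_suml -mulr_sumr -[_ *+ #|A|]mulr_natl; ring.
Qed.

Lemma cauchy (A : {pred T}) (f : T -> R) :
  (\sum_(u in A) f u) ^+ 2 <= #|A|%:R * \sum_(u in A) f u ^+ 2.
Proof.
have : 0 <= \sum_(u in A) \sum_(v in A) (f u - f v) ^+ 2.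
  by apply: sumr_ge0 => u _; apply: sumr_ge0 => v _; apply: sqr_ge0.
rewrite sqdiff; lra.
Qed.

Lemma cauchy_eq (f : T -> R) :
  (\sum_u f u) ^+ 2 = #|T|%:R * \sum_u f u ^+ 2 -> forall u v, f u = f v.
Proof.
move=> H u v.
have := sqdiff T f; rewrite H subrr mulr0 => H0.
have := psumr_eq0P (P := mem T) _ H0 (i := u) => /(_ _ isT).
have Hin : forall i, i \in T -> 0 <= \sum_(v in T) (f i - f v) ^+ 2.
  by move=> i _; apply: sumr_ge0 => w _; apply: sqr_ge0.
move=> /(_ Hin) Hu.
have := psumr_eq0P (P := mem T) _ Hu (i := v) => /(_ (fun _ _ => sqr_ge0 _) isT).
by move/eqP; rewrite sqrf_eq0 subr_eq0 => /eqP.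
Qed.
End Cauchy.

Section MS.
Variable R : realFieldType.
Variables (T : finType) (e : rel T).
Hypothesis esym : symmetric e.
Hypothesis eirr : irreflexive e.

Definition Bf (x y : T -> R) := \sum_u \sum_v (e u v)%:R * x u * y v.
Definition Gf w (y : T -> R) := \sum_v (e w v)%:R * y v.

Lemma sum_delta a (F : T -> R) : \sum_u (u == a)%:R * F u = F a.
Proof.
rewrite (bigD1 a) //= eqxx mul1r big1 ?addr0 // => u /negbTE ->; by rewrite mul0r.
Qed.

Lemma B_sym x y : Bf x y = Bf y x.
Proof.
rewrite /Bf exchange_big; apply: eq_bigr => u _; apply: eq_bigr => v _.
by rewrite esym; ring.
Qed.

Lemma B_lin a b x y z :
  Bf (fun u => a * x u + b * y u) z = a * Bf x z + b * Bf y z.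
Proof.
rewrite /Bf !mulr_sumr -big_split; apply: eq_bigr => u _ /=.
rewrite !mulr_sumr -big_split; apply: eq_bigr => v _ /=; ring.
Qed.

Lemma B_expand a b x y :
  Bf (fun u => a * x u + b * y u) (fun u => a * x u + b * y u) =
  a ^+ 2 * Bf x x + 2 * a * b * Bf x y + b ^+ 2 * Bf y y.
Proof.
rewrite B_lin (B_sym x) (B_sym y) !B_lin (B_sym y x); ring.
Qed.

Lemma B_G x z : Bf x z = \sum_u x u * Gf u z.
Proof.
by apply: eq_bigr => u _; rewrite /Gf mulr_sumr; apply: eq_bigr => v _; ring.
Qed.

Lemma G1 w : Gf w (fun _ => 1) = (deg e w)%:R.
Proof.
rewrite /Gf /deg -sum1_card natr_sum [RHS]big_mkcond /=; apply: eq_bigr => v _.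
by rewrite inE; case: (e w v); rewrite ?mulr1.
Qed.

Lemma G_delta w a b :
  Gf w (fun u => (u == a)%:R - (u == b)%:R) = (e w a)%:R - (e w b)%:R.
Proof.
rewrite /Gf (eq_bigr (fun v => (v == a)%:R * (e w v)%:R - (v == b)%:R * (e w v)%:R)).
  by rewrite sumrB !sum_delta.
by move=> v _; ring.
Qed.

Lemma B_delta a b z :
  Bf (fun u => (u == a)%:R - (u == b)%:R) z = Gf a z - Gf b z.
Proof.
rewrite B_G (eq_bigr (fun u => (u == a)%:R * Gf u z - (u == b)%:R * Gf u z)).
  by rewrite sumrB !sum_delta.
by move=> u _; ring.
Qed.


Definition supp (x : T -> R) := [set u | x u != 0].

Lemma sum_supp (x : T -> R) (F : R -> R) : F 0 = 0 ->
  \sum_u F (x u) = \sum_(u in supp x) F (x u).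
Proof.
move=> F0; rewrite [RHS]big_mkcond /=; apply: eq_bigr => u _; rewrite inE.
by case: eqP => // ->.
Qed.

Lemma MS_clique (x : T -> R) : (forall u, 0 <= x u) -> is_clique e (supp x) ->
  Bf x x * (clique_number e)%:R <= ((clique_number e)%:R - 1) * (\sum_u x u) ^+ 2.
Proof.
move=> x0 cl.
have Hk : (#|supp x| <= clique_number e)%N.
  rewrite /clique_number; exact: (@leq_bigmax_cond _ (fun A => is_clique e A) (fun A => #|A|) (supp x) cl).
have HB : Bf x x = (\sum_u x u) ^+ 2 - \sum_u x u ^+ 2.
  have E : forall u v, (e u v)%:R * x u * x v = x u * x v - (u == v)%:R * (x u * x v) :> R.
    move=> u v; case: (eqVneq u v) => [->|uv]; first by rewrite eirr /=; ring.
    case: (eqVneq (x u) 0) => [->|xu]; first by ring.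
    case: (eqVneq (x v) 0) => [->|xv]; first by ring.
    have /forall_inP/(_ u) := cl; rewrite inE => /(_ xu) /forall_inP/(_ v).
    by rewrite inE => /(_ xv); rewrite uv /= => ->; rewrite /= mul1r mul0r subr0.
  rewrite /Bf (eq_bigr (fun u => \sum_v (x u * x v - (u == v)%:R * (x u * x v)))); last first.
    by move=> u _; apply: eq_bigr => v _; apply: E.
  rewrite (eq_bigr (fun u => x u * \sum_v x v - x u ^+ 2)).
    by rewrite sumrB -mulr_suml expr2.
  move=> u _; rewrite sumrB mulr_sumr; congr (_ - _).
  rewrite (eq_bigr (fun v => (v == u)%:R * (x u * x v))); last by move=> v _; rewrite eq_sym.
  by rewrite sum_delta expr2.
have Hc := cauchy (supp x) x.
rewrite -(sum_supp x (F := id)) // -(sum_supp x (F := fun t => t ^+ 2)) ?expr0n // in Hc.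
have Hk' : (#|supp x|%:R <= (clique_number e)%:R :> R) by rewrite ler_nat.
have Hs2 : 0 <= \sum_u x u ^+ 2 by apply: sumr_ge0 => u _; apply: sqr_ge0.
rewrite HB; nra.
Qed.

Lemma sum_delta1 (c : T) : \sum_u (u == c)%:R = 1 :> R.
Proof. by rewrite -[RHS](sum_delta c (fun _ => 1)); apply: eq_bigr => u _; rewrite mulr1. Qed.

Lemma MS_step (x : T -> R) a b : (forall u, 0 <= x u) ->
  a \in supp x -> b \in supp x -> a != b -> ~~ e a b -> Gf b x <= Gf a x ->
  exists y : T -> R, [/\ forall u, 0 <= y u, (#|supp y| < #|supp x|)%N,
     \sum_u y u = \sum_u x u & Bf x x <= Bf y y].
Proof.
move=> x0 aS bS ab nab Gab.
pose h := fun u : T => (u == a)%:R - (u == b)%:R :> R.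
pose y := fun u => 1 * x u + x b * h u.
have yb : y b = 0 by rewrite /y /h eqxx eq_sym (negbTE ab) /=; ring.
have ya : y a = x a + x b by rewrite /y /h eqxx (negbTE ab) /=; ring.
have yo : forall u, u != a -> u != b -> y u = x u.
  by move=> u ua ub; rewrite /y /h (negbTE ua) (negbTE ub) /=; ring.
exists y; split.
- move=> u; case: (eqVneq u a) => [->|ua]; first by rewrite ya addr_ge0.
  case: (eqVneq u b) => [->|ub]; first by rewrite yb.
  by rewrite yo.
- apply: (@leq_ltn_trans #|supp x :\ b|).
    apply: subset_leq_card; apply/subsetP => u; rewrite !inE.
    case: (eqVneq u b) => [->|ub]; first by rewrite yb eqxx.
    case: (eqVneq u a) => [->|ua]; first by move: aS; rewrite inE.
    by rewrite yo.
  by rewrite (cardsD1 b (supp x)) bS.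
  by rewrite /y /h big_split /= -!mulr_sumr sumrB !sum_delta1 subrr mulr0 addr0 mul1r.
- rewrite /y B_expand.
  have Hhh : Bf h h = 0.
    rewrite /h B_delta !G_delta !eirr (esym b a) (negbTE nab) /=; ring.
  have Hxh : Bf x h = Gf a x - Gf b x by rewrite B_sym /h B_delta.
  rewrite Hhh Hxh; have := x0 b; nra.
Qed.

Lemma MS (x : T -> R) : (forall u, 0 <= x u) ->
  Bf x x * (clique_number e)%:R <= ((clique_number e)%:R - 1) * (\sum_u x u) ^+ 2.
Proof.
move=> Hx0; suff H : forall m (x : T -> R), (forall u, 0 <= x u) -> (#|supp x| <= m)%N ->
  Bf x x * (clique_number e)%:R <= ((clique_number e)%:R - 1) * (\sum_u x u) ^+ 2.
  exact: (H _ x Hx0 (leqnn _)).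
clear Hx0 x.
elim=> [|m IH] x x0 Hm; (case: (boolP (is_clique e (supp x))) => cl; first exact: MS_clique);
  move: cl => /forall_inPn [a aS] /forall_inPn [b bS]; rewrite negb_imply => /andP [ab nab].
  by move: Hm; rewrite leqn0 => /eqP/cards0_eq Hs; rewrite Hs inE in aS.
have step : forall a b, a \in supp x -> b \in supp x -> a != b -> ~~ e a b -> Gf b x <= Gf a x ->
  Bf x x * (clique_number e)%:R <= ((clique_number e)%:R - 1) * (\sum_u x u) ^+ 2.
  move=> a' b' aS' bS' ab' nab' G'.
  have [y [y0 ys ysum yB]] := MS_step x0 aS' bS' ab' nab' G'.
  have := IH y y0 (leq_trans ys Hm).
  rewrite ysum => H; apply: le_trans H; apply: ler_wpM2r; [exact: ler0n | exact: yB].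
case: (lerP (Gf b x) (Gf a x)) => G; first exact: step G.
apply: (step b a) => //; first by rewrite eq_sym.
  by rewrite esym.
exact: ltW.
Qed.

End MS.

Lemma regular_of_eq (R : realType) (T : finType) (e : rel T) :
  symmetric e -> irreflexive e -> (1 < clique_number e)%N ->
  let K := (clique_number e)%:R : R in
  let M := (K - 1) / K * #|T|%:R in
  \sum_v (deg e v)%:R ^+ 2 = #|T|%:R * M ^+ 2 -> regular_graph e.
Proof.
move=> esym eirr k2 K M Hs.
set N : R := #|T|%:R.
set s2 := \sum_v (deg e v)%:R ^+ 2 in Hs.
set c := (K - 1) / K.
have K1 : 1 < K by rewrite /K ltr1n.
have Kpos : 0 < K by lra.
have cpos : 0 < c by rewrite /c divr_gt0 //; lra.
have N0 : 0 <= N by rewrite /N ler0n.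
have M0 : 0 <= M by rewrite /M; apply: mulr_ge0; [apply: divr_ge0; lra | lra].
pose d := fun u => (deg e u)%:R : R.
pose one := fun _ : T => 1 : R.
have MSc : forall x : T -> R, (forall u, 0 <= x u) -> Bf e x x <= c * (\sum_u x u) ^+ 2.
  move=> x x0; have := MS esym eirr x0; rewrite -/K => H.
  rewrite /c mulrAC ler_pdivlMr //.
have absB : forall w : T -> R, Bf e w w <= Bf e (fun u => `|w u|) (fun u => `|w u|) /\
                              - Bf e w w <= Bf e (fun u => `|w u|) (fun u => `|w u|).
  move=> w; split.
    apply: ler_sum => u _; apply: ler_sum => v _; rewrite -!mulrA.
    apply: ler_wpM2l; first exact: ler0n.
    by rewrite -normrM ler_norm.
  rewrite -sumrN; apply: ler_sum => u _; rewrite -sumrN; apply: ler_sum => v _.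
  rewrite -!mulrA -mulrN; apply: ler_wpM2l; first exact: ler0n.
  by rewrite -normrM -normrN ler_norm.
have bnd : forall w : T -> R, Bf e w w <= M * \sum_u w u ^+ 2 /\ - Bf e w w <= M * \sum_u w u ^+ 2.
  move=> w; have [H1 H2] := absB w.
  have H3 := MSc (fun u => `|w u|) (fun u => normr_ge0 _).
  have H4 : (\sum_u `|w u|) ^+ 2 <= N * \sum_u `|w u| ^+ 2 := cauchy T _.
  have E : \sum_u `|w u| ^+ 2 = \sum_u w u ^+ 2 by apply: eq_bigr => u _; rewrite real_normK ?num_real.
  rewrite E in H4; have H5 := ler_wpM2l (ltW cpos) H4.
  have EM : M = c * N by [].
  rewrite EM -mulrA; split; lra.
pose p := fun u => M * one u + 1 * d u.
pose m := fun u => M * one u + (-1) * d u.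
have B1d : Bf e one d = s2.
  rewrite B_sym // B_G; apply: eq_bigr => u _; rewrite /one G1 /d; ring.
have Bp := B_expand esym M 1 one d; rewrite -/p B1d in Bp.
have Bm := B_expand esym M (-1) one d; rewrite -/m B1d in Bm.
have HS : \sum_u p u ^+ 2 + \sum_u m u ^+ 2 = 2 * (N * M ^+ 2 + s2).
  rewrite -big_split /= (eq_bigr (fun u => 2 * M ^+ 2 + 2 * d u ^+ 2)); last first.
    by move=> u _; rewrite /p /m /one; ring.
  rewrite big_split /= sumr_const -mulr_sumr -mulr_natr. rewrite -/s2 /N cardE; ring.
have [bp _] := bnd p; have [_ bm] := bnd m.
have HS' := congr1 (fun t => M * t) HS; have Hs' := congr1 (fun t => M * t) Hs.
simpl in HS', Hs'.
have Pe : Bf e p p = M * \sum_u p u ^+ 2 by nra.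
have p0 : forall u, 0 <= p u by move=> u; rewrite /p /one /d mulr1 mul1r addr_ge0 ?ler0n.
have H1 := MSc p p0.
have H2 : (\sum_u p u) ^+ 2 <= N * \sum_u p u ^+ 2 := cauchy T _.
have H3 := ler_wpM2l (ltW cpos) H2.
have EM : M = c * N by [].
have H4 : c * (\sum_u p u) ^+ 2 = c * (N * \sum_u p u ^+ 2).
  by apply/eqP; rewrite eq_le H3 /=; rewrite EM -mulrA in Pe; rewrite -Pe.
have H5 : (\sum_u p u) ^+ 2 = #|T|%:R * \sum_u p u ^+ 2.
  by apply: (mulfI (lt0r_neq0 cpos)).
move=> u v; have := cauchy_eq H5 u v; rewrite /p /one /d !mulr1 !mul1r.
by move/addrI/eqP; rewrite eqr_nat => /eqP.
Qed.

Theorem corollary4p4 (R : realType) (T : finType) (e : rel T) :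
  simple_graph e ->
  ((clique_number e)%:R : R) = (#|T|%:R) / (#|T|%:R - quad_mean_deg R e) ->
  complete_multipartite e (clique_number e) /\ regular_graph e.
Proof.
case=> esym eirr Hk.
have cmax : forall A : {set T}, is_clique e A -> (#|A| <= clique_number e)%N.
  by move=> A cA; rewrite /clique_number; exact: (@leq_bigmax_cond _ (fun A => is_clique e A) (fun A => #|A|) A cA).
case: (posnP #|T|) => [n0|npos].
  have nT : forall x : T, False by move=> x; have := card0_eq n0 x; rewrite !inE.
  have k0 : clique_number e = 0%N.
    apply/eqP; rewrite -leqn0; apply/bigmax_leqP => A _; rewrite -n0; exact: max_card.
  split; last by move=> v; case: (nT v).
  have f : T -> 'I_(clique_number e) by move=> x; case: (nT x).
  exists f; split => [i|x]; last by case: (nT x).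
  by exfalso; move: (ltn_ord i); rewrite {2}k0.
have [x0 _] : exists x0 : T, x0 \in T by apply/card_gt0P.
have k1 : (0 < clique_number e)%N.
  have cl : is_clique e [set x0].
    by apply/forall_inP => a; rewrite inE => /eqP-> ; apply/forall_inP => b; rewrite inE => /eqP->; rewrite eqxx.
  by have := cmax _ cl; rewrite cards1.
move: Hk cmax k1; set k := clique_number e => Hk cmax k1.
set N : R := #|T|%:R in Hk.
set q := quad_mean_deg R e in Hk.
set K : R := k%:R in Hk.
have Kpos : 0 < K by rewrite /K ltr0n.
have K1 : 1 <= K by rewrite /K ler1n.
have Npos : 0 < N by rewrite /N ltr0n.
have Nq : N - q != 0.
  apply/eqP => E; move: Hk; rewrite E invr0 mulr0 => /eqP; rewrite pnatr_eq0 => /eqP k0.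
  by rewrite k0 in k1.
have Kq : K * (N - q) = N by rewrite Hk mulfVK.
set M := (K - 1) / K * N.
have qM : q = M.
  apply: (mulfI (lt0r_neq0 Kpos)); rewrite /M mulrA mulrCA divff ?lt0r_neq0 // mulr1.
  lra.
have M0 : 0 <= M by rewrite /M; apply: mulr_ge0; [apply: divr_ge0; lra | lra].
set s2 := \sum_v (deg e v)%:R ^+ 2 : R.
have s20 : 0 <= s2 by apply: sumr_ge0 => v _; apply: sqr_ge0.
have Hs : s2 = #|T|%:R * M ^+ 2.
  have : q ^+ 2 = s2 / N.
    by rewrite /q /quad_mean_deg sqr_sqrtr // divr_ge0 // ltW.
  rewrite qM => ->; rewrite -/N mulrC mulfVK // lt0r_neq0 //.
have reg : regular_graph e.
  case: (ltnP 1 k) => k2; first exact: (regular_of_eq esym eirr k2 Hs).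
  have k1' : k = 1%N by apply/eqP; rewrite eqn_leq k2 k1.
  have M00 : M = 0 by rewrite /M /K k1' subrr mul0r mul0r.
  rewrite M00 expr0n mulr0 in Hs.
  have d0 : forall v, deg e v = 0%N.
    move=> v; have := psumr_eq0P (P := predT) (fun i _ => sqr_ge0 ((deg e i)%:R : R)) Hs (i := v) isT.
    by move/eqP; rewrite sqrf_eq0 pnatr_eq0 => /eqP.
  by move=> v w; rewrite !d0.
split; last exact: reg.
set r := deg e x0.
have degr : forall v, deg e v = r by move=> v; apply: reg.
have s2r : s2 = N * (r%:R ^+ 2).
  rewrite /s2 (eq_bigr (fun _ => (r%:R ^+ 2 : R))); last by move=> v _; rewrite degr.
  by rewrite sumr_const /N cardE mulr_natl.
have rM : (r%:R : R) = M.
  apply/eqP; rewrite -(@eqrXn2 _ 2) // ?ler0n //; apply/eqP.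
  apply: (mulfI (lt0r_neq0 Npos)); rewrite -s2r Hs.
  by [].
have rk : (r * k = #|T| * k.-1)%N.
  apply/eqP; rewrite -(eqr_nat R) natrM natrM -/K -/N -subn1 natrB // rM /M -/K.
  apply/eqP; field; exact: lt0r_neq0.
have degST : forall v, degS e [set: T] v = deg e v.
  by move=> v; rewrite /degS /deg; apply: eq_card => w; rewrite !inE.
have Hcl : forall A : {set T}, A \subset [set: T] -> is_clique e A -> (#|A| <= k.-1.+1)%N.
  by move=> A _ cA; rewrite prednK //; apply: cmax.
have Hdeg : forall v, v \in [set: T] -> (#|[set: T]| * k.-1 <= degS e [set: T] v * k.-1.+1)%N.
  by move=> v _; rewrite degST cardsT prednK // degr rk.
have [Ha Hb Hc] := @comb_main T e esym eirr k.-1 [set: T] Hcl Hdeg.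
have Tne : [set: T] != set0 by apply/set0Pn; exists x0; rewrite in_setT.
have [C [_ cC cardC]] := Hc Tne.
rewrite prednK // in cardC.
apply: (build_f esym eirr k1 cC cardC).
  by move=> x y z; apply: Hb; rewrite in_setT.
by move=> A cA; apply: cmax.
Qed.
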